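(* Let $\mathbf{x}\in\mathcal{P}$ and consider the scaled-down notification policy run with ex ante solution $\mathbf{x}$. Under the index-based priority scheme, for every volunteer $v\in[V]$, the expected number of tasks completed by $v$ is at least $\frac{1}{2-q}f_v(\mathbf{x})$, where $f_v(\mathbf{x})=\sum_{t=1}^T\sum_{s=1}^S\lambda_{s,t}\big(\prod_{u<v}(1-p_{u,s}x_{u,s,t})\big)p_{v,s}x_{v,s,t}$ and $q$ is the minimum discrete hazard rate of $g$.
   Context: Online volunteer notification problem. An instance consists of volunteers $[V]$, task types $[S]$, horizon $T$, arrival probabilities $\lambda_{s,t}\ge0$ with $\sum_s\lambda_{s,t}\le1$, match probabilities $p_{v,s}\in[0,1]$, and a probability mass function $g$ on the positive integers with CDF $G(\tau)=\sum_{i\le\tau}g(i)$, $G(0)=0$. In each period $t$ at most one task arrives, of type $s$ with probability $\lambda_{s,t}$, independently across periods. All volunteers start active. Upon an arrival the platform notifies a subset of volunteers; each notified active volunteer $v$ responds positively independently with probability $p_{v,s}$. A volunteer active and notified at time $t$ becomes inactive (regardless of response) and active again at $t+Z$, $Z\sim g$ independent; inactive volunteers ignore notifications and are unaffected by them. Index-based priority scheme: if several notified active volunteers respond positively, the one with smallest index completes the task. MDHR: $q=\min_{\tau\in\mathbb{N}}\frac{g(\tau)}{1-G(\tau-1)}$ (with $\frac00:=1$). $\mathcal{P}$: set of $\mathbf{x}\in\mathbb{R}^{V\times S\times T}$ with $0\le x_{v,s,t}\le1$ and $\sum_{\tau=1}^t\sum_{s}\lambda_{s,\tau}x_{v,s,\tau}(1-G(t-\tau))\le1$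 for all $v,t$. SDN policy with ex ante solution $\mathbf{x}$: $\beta_{v,1}=1$, $\beta_{v,t}=1-\sum_{t'=1}^{t-1}\sum_{s=1}^S\lambda_{s,t'}\frac{x_{v,s,t'}}{2-q}(1-G(t-t'))$ for $t\ge2$; when a task of type $s$ arrives at time $t$, each volunteer $v$ is notified independently with probability $\frac{x_{v,s,t}}{(2-q)\beta_{v,t}}$. *)

(* Defs.v *)
From HB Require Import structures.
From mathcomp Require Import all_boot all_order all_algebra.
From mathcomp Require Import all_classical all_reals all_analysis.
Set Implicit Arguments. Unset Strict Implicit. Unset Printing Implicit Defensive.
Import Order.TTheory GRing.Theory Num.Theory.
Local Open Scope ring_scope.
Local Open Scope classical_set_scope.

Section Model.
Variable R : realType.

Definition cdf (g : nat -> R) (n : nat) : R := \sum_(1 <= i < n.+1) g i.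

Definition is_pmf_pos (g : nat -> R) : Prop :=
  g 0%N = 0 /\ (forall n, 0 <= g n) /\
  ((fun n : nat => \sum_(0 <= k < n) g k) @ \oo --> (1 : R^o)).

(** discrete hazard rate g(tau)/(1-G(tau-1)), with 0/0 := 1 *)
Definition hazard (g : nat -> R) (tau : nat) : R :=
  let d := 1 - cdf g tau.-1 in if d == 0 then 1 else g tau / d.

Definition mdhr (g : nat -> R) : R :=
  inf [set hazard g tau | tau in [set tau : nat | (0 < tau)%N]].

Variables (V S T : nat) (lam : 'I_S -> nat -> R) (p : 'I_V -> 'I_S -> R)
  (g : nat -> R).

(** Periods are 1..T; types are 'I_S; volunteers are 'I_V (index order = priority). *)
Definition valid_instance : Prop :=
  (forall s t, (1 <= t <= T)%N -> 0 <= lam s t) /\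
  (forall t, (1 <= t <= T)%N -> \sum_(s < S) lam s t <= 1) /\
  (forall v s, 0 <= p v s <= 1) /\
  is_pmf_pos g.

Definition in_P (x : 'I_V -> 'I_S -> nat -> R) : Prop :=
  (forall v s t, (1 <= t <= T)%N -> 0 <= x v s t <= 1) /\
  (forall v t, (1 <= t <= T)%N ->
     \sum_(1 <= tau < t.+1) \sum_(s < S)
        lam s tau * x v s tau * (1 - cdf g (t - tau)) <= 1).

Variable x : 'I_V -> 'I_S -> nat -> R.

Definition beta (v : 'I_V) (t : nat) : R :=
  1 - \sum_(1 <= t' < t) \sum_(s < S)
        lam s t' * (x v s t' / (2 - mdhr g)) * (1 - cdf g (t - t')).

Definition notif_prob (v : 'I_V) (s : 'I_S) (t : nat) : R :=
  x v s t / ((2 - mdhr g) * beta v t).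

Definition bern (a : R) (b : bool) : R := if b then a else 1 - a.

(** Law of the inactivity duration Z, observed up to the horizon when drawn at
    time t: value k in 1..T-t means Z = k; value 0 encodes Z > T - t
    (the volunteer does not become active again before the horizon ends). *)
Definition zweight (t : nat) (k : 'I_T.+1) : R :=
  if val k == 0%N then 1 - cdf g (T - t)
  else if (val k <= T - t)%N then g k else 0.

(** State: r v = period from which volunteer v is active (active at t iff r v <= t).
    Per period, for each volunteer: c v = (notified?, positive response?) and
    z v = inactivity duration, all drawn independently (unused draws are
    irrelevant). *)
Definition step_weight (t : nat) (s : 'I_S)
    (c : {ffun 'I_V -> bool * bool}) (z : {ffun 'I_V -> 'I_T.+1}) : R :=
  \prod_(v < V) (bern (notif_prob v s t) (c v).1 * bern (p v s) (c v).2
                 * zweight t (z v)).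

Definition accepts (r : {ffun 'I_V -> nat}) (t : nat)
    (c : {ffun 'I_V -> bool * bool}) (v : 'I_V) : bool :=
  [&& (r v <= t)%N, (c v).1 & (c v).2].

Definition completes r t c (v0 : 'I_V) : bool :=
  accepts r t c v0 && [forall u : 'I_V, (u < v0)%N ==> ~~ accepts r t c u].

Definition next_state (r : {ffun 'I_V -> nat}) (t : nat)
    (c : {ffun 'I_V -> bool * bool}) (z : {ffun 'I_V -> 'I_T.+1})
    : {ffun 'I_V -> nat} :=
  [ffun v => if (r v <= t)%N && (c v).1
             then (if val (z v) == 0%N then T.+1 else t + val (z v))%N
             else r v].

(** expected number of tasks completed by v0 in periods t, ..., t+n-1,
    starting from state r *)
Fixpoint exp_completed (v0 : 'I_V) (n t : nat) (r : {ffun 'I_V -> nat})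
    {struct n} : R :=
  match n with
  | 0%N => 0
  | n'.+1 =>
      (1 - \sum_(s < S) lam s t) * exp_completed v0 n' t.+1 r
      + \sum_(s < S) lam s t *
          \sum_(c : {ffun 'I_V -> bool * bool})
          \sum_(z : {ffun 'I_V -> 'I_T.+1})
            step_weight t s c z *
            ((completes r t c v0)%:R
             + exp_completed v0 n' t.+1 (next_state r t c z))
  end.

Definition expected_completed (v0 : 'I_V) : R :=
  exp_completed v0 T 1 [ffun => 0%N].

Definition f_obj (v : 'I_V) : R :=
  \sum_(1 <= t < T.+1) \sum_(s < S)
     lam s t * (\prod_(u < V | (u < v)%N) (1 - p u s * x u s t))
     * p v s * x v s t.

End Model.

(* Main.v *)
Require Import Defs.
From HB Require Import structures.
From mathcomp Require Import all_boot all_order all_algebra.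
From mathcomp Require Import all_classical all_reals all_analysis.
From mathcomp Require Import ring lra zify.
Set Implicit Arguments. Unset Strict Implicit. Unset Printing Implicit Defensive.
Import Order.TTheory GRing.Theory Num.Theory.
Local Open Scope ring_scope.
Local Open Scope classical_set_scope.

Section Pmf.
Variable R : realType.
Variable g : nat -> R.
Hypothesis hg : is_pmf_pos g.

Lemma cdf_ge0 n : 0 <= Defs.cdf g n.
Proof. case: hg => _ [g0 _]; rewrite /Defs.cdf; apply: sumr_ge0 => i _; exact: g0. Qed.

Lemma cdf_le1 n : Defs.cdf g n <= 1.
Proof.
case: hg => g00 [g0 cv].
have -> : Defs.cdf g n = \sum_(0 <= k < n.+1) g k.
  by rewrite /Defs.cdf [in RHS]big_ltn // g00 add0r.
have hom : {homo (fun n : nat => \sum_(0 <= k < n) g k) : n m / (n <= m)%N >-> n <= m}.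
  move=> a b ab; rewrite (big_cat_nat (leq0n a) ab) /= lerDl.
  by apply: sumr_ge0 => i _.
have cvn : cvgn (fun n : nat => \sum_(0 <= k < n) g k) by apply/cvg_ex; exists 1.
have := nondecreasing_cvgn_le hom cvn n.+1.
by rewrite (cvg_lim _ cv).
Qed.

Lemma cdfS n : Defs.cdf g n.+1 = Defs.cdf g n + g n.+1.
Proof. by rewrite /Defs.cdf big_nat_recr. Qed.

Lemma hazard_ge0 tau : 0 <= hazard g tau.
Proof.
case: hg => _ [g0 _]; rewrite /hazard; case: ifP => // d0.
apply: divr_ge0 => //; rewrite subr_ge0; exact: cdf_le1.
Qed.

Lemma mdhr_le tau : (0 < tau)%N -> mdhr g <= hazard g tau.
Proof.
move=> tau0; rewrite /mdhr; apply: ge_inf; last by exists tau.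
exists 0 => y [t _ <-]; exact: hazard_ge0.
Qed.

Lemma mdhr_le1 : mdhr g <= 1.
Proof.
apply: (le_trans (@mdhr_le 1%N isT)).
case: hg => _ [g0 _]; rewrite /hazard; case: ifP => // /negbT d0.
have dpos : 0 < 1 - Defs.cdf g 0.
  by rewrite lt0r d0 subr_ge0 cdf_le1.
rewrite ler_pdivrMr // mul1r.
have := cdf_le1 1; rewrite cdfS; lra.
Qed.

Lemma tail_step tau : (0 < tau)%N ->
  1 - Defs.cdf g tau <= (1 - mdhr g) * (1 - Defs.cdf g tau.-1).
Proof.
move=> tau0; have hq := @mdhr_le tau tau0.
case: hg => _ [g0 _].
have e : Defs.cdf g tau = Defs.cdf g tau.-1 + g tau by move: tau0; case: (tau) => // t _ /=; rewrite cdfS.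
move: hq; rewrite /hazard; case: ifP => [/eqP d0|/negbT d0] hq.
  rewrite d0 mulr0; have := g0 tau; rewrite e; lra.
have dpos : 0 < 1 - Defs.cdf g tau.-1 by rewrite lt0r d0 subr_ge0 cdf_le1.
rewrite ler_pdivlMr // in hq.
rewrite e; nra.
Qed.

End Pmf.

Section Main.
Variable R : realType.
Variables (V S T : nat) (lam : 'I_S -> nat -> R) (p : 'I_V -> 'I_S -> R)
  (g : nat -> R) (x : 'I_V -> 'I_S -> nat -> R).
Hypothesis hv : valid_instance T lam p g.
Hypothesis hP : in_P T lam g x.
Variable v : 'I_V.

Local Notation G := (Defs.cdf g).
Local Notation q := (mdhr g).
Local Notation pi := (notif_prob lam g x).
Local Notation bt := (beta lam g x).

Lemma hg : is_pmf_pos g. Proof. by case: hv => _ [_ [_ h]]. Qed.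
Lemma lam_ge0 s t : (1 <= t <= T)%N -> 0 <= lam s t.
Proof. by case: hv => h _; apply: h. Qed.
Lemma lam_sum t : (1 <= t <= T)%N -> 0 <= 1 - \sum_(s < S) lam s t.
Proof. by case: hv => _ [h _] ht; rewrite subr_ge0; apply: h. Qed.
Lemma p01 u s : 0 <= p u s <= 1.
Proof. by case: hv => _ [_ [h _]]. Qed.
Lemma x01 u s t : (1 <= t <= T)%N -> 0 <= x u s t <= 1.
Proof. by case: hP => h _; apply: h. Qed.
Lemma G_le1 n : G n <= 1.
Proof. exact: (cdf_le1 hg). Qed.
Lemma q_le1 : q <= 1.
Proof. exact: (mdhr_le1 hg). Qed.
Lemma twoq_gt0 : 0 < 2 - q.
Proof. have := q_le1; lra. Qed.

Lemma beta_lb u t : (1 <= t <= T)%N -> 1 <= (2 - q) * bt u t.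
Proof.
rewrite /beta; case: t => [//|t] /andP[_ tT].
have hq := q_le1.
case: t tT => [|t] tT.
  rewrite big_geq // subr0 mulr1; lra.
have q0 : 2 - q != 0 by have := twoq_gt0; lra.
set B := \sum_(1 <= t' < t.+2) \sum_(s < S)
     lam s t' * x u s t' * (1 - G (t.+2 - t')).
have eA : \sum_(1 <= t' < t.+2) \sum_(s < S)
     lam s t' * (x u s t' / (2 - q)) * (1 - G (t.+2 - t')) = (2 - q)^-1 * B.
  rewrite /B mulr_sumr; apply: eq_bigr => t' _; rewrite mulr_sumr.
  apply: eq_bigr => s _; field => //.
have hB : B <= 1 - q.
  have P := hP.2 u t.+1 (ltnW tT).
  apply: (le_trans (_ : _ <= (1 - q) * \sum_(1 <= tau < t.+2) \sum_(s < S)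
        lam s tau * x u s tau * (1 - G (t.+1 - tau)))).
    rewrite mulr_sumr; apply: ler_sum_nat => t' /andP[t1 t2].
    rewrite mulr_sumr; apply: ler_sum => s _.
    have t'T : (1 <= t' <= T)%N by apply/andP; split => //; apply: leq_trans (ltnW tT); rewrite -ltnS.
    have hl := lam_ge0 s t'T; have /andP[hx _] := x01 u s t'T.
    have ts := @tail_step _ g hg (t.+2 - t').
    rewrite subSn // in ts; have ts' := ts isT; rewrite /= in ts'.
    have lx : 0 <= lam s t' * x u s t' by apply: mulr_ge0.
    rewrite (@subSn t' t.+1) // [X in _ <= X]mulrCA; apply: ler_wpM2l; [exact: lx | exact: ts'].
  have h1q : 0 <= 1 - q by lra.
  have := ler_wpM2l h1q P; rewrite mulr1 => H. exact: H.
rewrite eA mulrBr mulr1 mulrA mulfV // mul1r; lra.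
Qed.

Lemma beta_pos u t : (1 <= t <= T)%N -> 0 < bt u t.
Proof.
move=> ht; have := beta_lb u ht; have := twoq_gt0 => h1 h2.
rewrite lt0r; apply/andP; split.
  by apply/eqP => e; move: h2; rewrite e mulr0; lra.
by rewrite -(pmulr_rge0 _ h1); lra.
Qed.

Lemma pi01 u s t : (1 <= t <= T)%N -> 0 <= pi u s t <= x u s t.
Proof.
move=> ht; have h1 := beta_lb u ht; have /andP[x0 x1] := x01 u s ht.
have d0 : 0 < (2 - q) * bt u t by lra.
rewrite /notif_prob divr_ge0 ?(ltW d0) //= ler_pdivrMr //.
by rewrite -{1}(mulr1 (x u s t)) ler_wpM2l.
Qed.

Lemma pi_beta u s t : (1 <= t <= T)%N -> pi u s t * bt u t = x u s t / (2 - q).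
Proof.
move=> ht; have := beta_pos u ht; have := twoq_gt0 => h1 h2.
rewrite /notif_prob; field; apply/andP; split; lra.
Qed.


Lemma zw_ge0 t (k : 'I_T.+1) : 0 <= zweight g t k.
Proof.
have [_ [g0 _]] := hg.
rewrite /zweight; case: ifP => _; first by rewrite subr_ge0 G_le1.
by case: ifP.
Qed.

Lemma sum_gwin (n d e : nat) : (d <= e)%N ->
  \sum_(0 <= i < n) (if (i.+1 <= e)%N then (if (d < i.+1)%N then g i.+1 else 0) else 0)
  = G (minn n e) - G (minn n d).
Proof.
move=> de; elim: n => [|n IH]; first by rewrite big_geq // !min0n subrr.
rewrite big_nat_recr //= IH.
case: (leqP n.+1 d) => h1.
  have e1 : minn n.+1 e = n.+1 by lia.
  have e2 : minn n e = n by lia.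
  have e3 : minn n.+1 d = n.+1 by lia.
  have e4 : minn n d = n by lia.
  by rewrite ?e1 ?e2 ?e3 ?e4 if_same !subrr addr0.
case: (leqP n.+1 e) => h2.
  have e1 : minn n.+1 e = n.+1 by lia.
  have e2 : minn n e = n by lia.
  have e3 : minn n.+1 d = d by lia.
  have e4 : minn n d = d by lia.
  rewrite ?e1 ?e2 ?e3 ?e4 cdfS; lra.
have e1 : minn n.+1 e = e by lia.
have e2 : minn n e = e by lia.
have e3 : minn n.+1 d = d by lia.
have e4 : minn n d = d by lia.
by rewrite ?e1 ?e2 ?e3 ?e4 addr0.
Qed.

Lemma zw_gen t d : (t <= T)%N -> (d <= T - t)%N ->
  \sum_(k < T.+1) zweight g t k * (((d < val k)%N || (val k == 0%N))%:R) = 1 - G d.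
Proof.
move=> tT dT.
rewrite big_ord_recl /= /zweight /= mulr1.
under eq_bigr do rewrite /bump /= add1n orbF.
have -> : \sum_(i < T) (if (i.+1 <= T - t)%N then g i.+1 else 0) * (d < i.+1)%:R
   = \sum_(0 <= i < T) (if (i.+1 <= T - t)%N then (if (d < i.+1)%N then g i.+1 else 0) else 0).
  rewrite big_mkord; apply: eq_bigr => i _.
  by case: ifP => _; case: (d < i.+1)%N; rewrite ?mulr1 ?mulr0 ?mul0r.
rewrite sum_gwin //.
have -> : minn T (T - t) = (T - t)%N by lia.
have -> : minn T d = d by lia.
lra.
Qed.

Lemma zw_sum t : (t <= T)%N -> \sum_(k < T.+1) zweight g t k = 1.
Proof.
move=> tT; have := @zw_gen t 0%N tT (leq0n _).
have -> : G 0 = 0 by rewrite /Defs.cdf big_geq.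
rewrite subr0 => <-; apply: eq_bigr => k _.
by case: k => [[|k] ?] /=; rewrite mulr1.
Qed.

Lemma sum_bern (a : R) : \sum_(b : bool) bern a b = 1.
Proof. rewrite big_bool /bern /=; ring. Qed.

Lemma bern_ge0 (a : R) b : 0 <= a <= 1 -> 0 <= bern a b.
Proof. by move=> /andP[h1 h2]; case: b => //=; lra. Qed.

Definition nxt t rho (b : bool) (k : 'I_T.+1) : nat :=
  if (rho <= t)%N && b then (if val k == 0%N then T.+1 else t + val k)%N else rho.

Definition Est t (F : nat -> R) rho : R :=
  (1 - \sum_(s < S) lam s t) * F rho
  + \sum_(s < S) lam s t * \sum_(b : bool) \sum_(k < T.+1)
      bern (pi v s t) b * zweight g t k * F (nxt t rho b k).

Fixpoint a m t rho : R :=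
  if m is m'.+1 then Est t (a m' t.+1) rho else ((rho <= t)%N)%:R.

Lemma EstD t F1 F2 rho :
  Est t (fun r => F1 r + F2 r) rho = Est t F1 rho + Est t F2 rho.
Proof.
rewrite /Est.
have -> : \sum_(s < S) lam s t * \sum_(b : bool) \sum_(k < T.+1)
      bern (pi v s t) b * zweight g t k * (F1 (nxt t rho b k) + F2 (nxt t rho b k))
  = \sum_(s < S) lam s t * \sum_(b : bool) \sum_(k < T.+1)
      bern (pi v s t) b * zweight g t k * F1 (nxt t rho b k)
  + \sum_(s < S) lam s t * \sum_(b : bool) \sum_(k < T.+1)
      bern (pi v s t) b * zweight g t k * F2 (nxt t rho b k).
  rewrite -big_split; apply: eq_bigr => s _ /=; rewrite -mulrDr -big_split.
  congr (_ * _); apply: eq_bigr => b _; rewrite -big_split.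
  by apply: eq_bigr => k _; rewrite mulrDr.
ring.
Qed.

Lemma EstZ t c F rho : Est t (fun r => c * F r) rho = c * Est t F rho.
Proof.
rewrite /Est mulrDr !mulr_sumr; congr (_ + _); first ring.
apply: eq_bigr => s _; rewrite !mulr_sumr; apply: eq_bigr => b _.
rewrite !mulr_sumr; apply: eq_bigr => k _; ring.
Qed.

Lemma Est0 t rho : Est t (fun _ => 0) rho = 0.
Proof.
rewrite /Est mulr0 add0r big1 // => s _; rewrite big1 ?mulr0 // => b _.
by rewrite big1 // => k _; rewrite mulr0.
Qed.

Lemma EstB t F1 F2 rho :
  Est t (fun r => F1 r - F2 r) rho = Est t F1 rho - Est t F2 rho.
Proof.
have -> : (fun r => F1 r - F2 r) = (fun r => F1 r + (-1) * F2 r).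
  by apply/funext => r; ring.
by rewrite EstD EstZ; ring.
Qed.

Lemma Est_ext t F1 F2 rho : (forall r, F1 r = F2 r) -> Est t F1 rho = Est t F2 rho.
Proof. by move=> e; have -> : F1 = F2 by apply/funext. Qed.

Lemma Est_sum t m (F : nat -> nat -> R) rho :
  Est t (fun r => \sum_(j < m) F j r) rho = \sum_(j < m) Est t (F j) rho.
Proof.
elim: m => [|m IH]; first by rewrite big_ord0 (Est_ext _ (F2 := fun _ => 0)) ?Est0 // => r; rewrite big_ord0.
rewrite big_ord_recr /= -IH -EstD; apply: Est_ext => r; by rewrite big_ord_recr.
Qed.

Lemma Est_const t c rho : (t <= T)%N -> Est t (fun _ => c) rho = c.
Proof.
move=> tT; rewrite /Est.
have -> : \sum_(s < S) lam s t * \sum_(b : bool) \sum_(k < T.+1)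
      bern (pi v s t) b * zweight g t k * c = \sum_(s < S) lam s t * c.
  apply: eq_bigr => s _; congr (_ * _).
  transitivity (\sum_(b : bool) bern (pi v s t) b * c).
    apply: eq_bigr => b _; rewrite -mulr_suml -mulr_sumr zw_sum //; ring.
  by rewrite -mulr_suml sum_bern mul1r.
rewrite -mulr_suml; ring.
Qed.

Lemma Est_inact t F rho : (t < rho)%N -> (t <= T)%N -> Est t F rho = F rho.
Proof.
move=> tr tT; rewrite -(Est_const (F rho) rho tT) /Est /nxt.
by rewrite leqNgt tr.
Qed.

Definition h t' T' : R := \sum_(s < S) lam s t' * pi v s t' * (1 - G (T' - t')).

Lemma Est_tail t T' rho : (t < T' <= T)%N ->
  Est t (fun r => ((T' < r)%N)%:R) rho = ((T' < rho)%N)%:R + ((rho <= t)%N)%:R * h t T'.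
Proof.
move=> /andP[tT' T'T].
case: (leqP rho t) => hr; last first.
  rewrite Est_inact //; last by lia.
  by rewrite mul0r addr0.
have Tr : (T' < rho)%N = false by lia.
rewrite /Est /= Tr (_ : false%:R = 0 :> R) // mulr0 !add0r mul1r /h; apply: eq_bigr => s _.
rewrite -mulrA; congr (_ * _).
rewrite big_bool /= /nxt hr /=.
rewrite Tr.
rewrite [X in _ + X]big1 ?addr0; last by move=> k _; rewrite (_ : false%:R = 0 :> R) // mulr0.
rewrite -(@zw_gen t (T' - t)); [|lia|lia].
rewrite mulr_sumr; apply: eq_bigr => k _.
have -> : (T' < (if val k == 0%N then T.+1 else t + val k))%N
        = ((T' - t < val k)%N || (val k == 0%N)).
  case: eqP => [->|/eqP k0] /=; first by lia.
  by rewrite orbF; lia.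
ring.
Qed.

Lemma sum_prod (f : 'I_V -> bool * bool -> 'I_T.+1 -> R) :
  \sum_(c : {ffun 'I_V -> bool * bool}) \sum_(z : {ffun 'I_V -> 'I_T.+1})
     \prod_(u < V) f u (c u) (z u)
  = \prod_(u < V) \sum_(y : bool * bool) \sum_(k < T.+1) f u y k.
Proof.
rewrite bigA_distr_bigA /=; apply: eq_bigr => c _.
by rewrite bigA_distr_bigA.
Qed.

Lemma sum_bb (F : bool * bool -> R) :
  \sum_(y : bool * bool) F y = F (true, true) + F (true, false) + F (false, true) + F (false, false).
Proof.
transitivity (\sum_(y | xpredT y.1 && xpredT y.2) F (y.1, y.2)).
  by apply: eq_bigr => -[].
rewrite -(pair_big xpredT xpredT (fun a b => F (a, b))) /= !big_bool /=; ring.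
Qed.

Lemma prod_split (A : 'I_V -> R) (B : R) :
  \prod_(u < V) (if (u < v)%N then A u else if u == v then B else 1)
  = (\prod_(u < V | (u < v)%N) A u) * B.
Proof.
rewrite (bigID (fun u : 'I_V => (u < v)%N)) /=; congr (_ * _).
  by apply: eq_bigr => u ->.
rewrite (bigD1 v) /= ?ltnn // eqxx big1 ?mulr1 // => u /andP[/negbTE -> /negbTE ->].
done.
Qed.

Lemma sum_w u s t (psi : bool * bool -> R) : (t <= T)%N ->
  \sum_(y : bool * bool) \sum_(k < T.+1)
     bern (pi u s t) y.1 * bern (p u s) y.2 * zweight g t k * psi y
  = psi (true, true) * (pi u s t * p u s) + psi (true, false) * (pi u s t * (1 - p u s))
    + psi (false, true) * ((1 - pi u s t) * p u s)
    + psi (false, false) * ((1 - pi u s t) * (1 - p u s)).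
Proof.
move=> tT.
have e : forall y : bool * bool, \sum_(k < T.+1)
     bern (pi u s t) y.1 * bern (p u s) y.2 * zweight g t k * psi y
   = bern (pi u s t) y.1 * bern (p u s) y.2 * psi y.
  move=> y; transitivity (bern (pi u s t) y.1 * bern (p u s) y.2 * psi y *
     \sum_(k < T.+1) zweight g t k); last by rewrite zw_sum // mulr1.
  by rewrite mulr_sumr; apply: eq_bigr => k _; ring.
under eq_bigr do rewrite e.
rewrite sum_bb /bern /=; ring.
Qed.

Lemma marg t s (F : bool -> 'I_T.+1 -> R) : (t <= T)%N ->
  \sum_(c : {ffun 'I_V -> bool * bool}) \sum_(z : {ffun 'I_V -> 'I_T.+1})
     step_weight lam p g x t s c z * F (c v).1 (z v)
  = \sum_(b : bool) \sum_(k < T.+1) bern (pi v s t) b * zweight g t k * F b k.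
Proof.
move=> tT.
transitivity (\sum_(c : {ffun 'I_V -> bool * bool}) \sum_(z : {ffun 'I_V -> 'I_T.+1})
   \prod_(u < V) (bern (pi u s t) (c u).1 * bern (p u s) (c u).2 * zweight g t (z u)
      * (if u == v then F (c u).1 (z u) else 1))).
  apply: eq_bigr => c _; apply: eq_bigr => z _.
  rewrite big_split /= [X in _ = _ * X](bigD1 v) //= eqxx.
  rewrite [X in _ = _ * (_ * X)]big1 ?mulr1 //.
  by move=> u /negbTE ->.
rewrite (sum_prod (fun u y k => bern (pi u s t) y.1 * bern (p u s) y.2 * zweight g t k
      * (if u == v then F y.1 k else 1))) (bigD1 v) //= [X in _ * X = _]big1 ?mulr1; last first.
  move=> u /negbTE uv; rewrite (eq_bigr (fun y => \sum_(k < T.+1)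
     bern (pi u s t) y.1 * bern (p u s) y.2 * zweight g t k * (fun _ => 1) y)); last first.
    by move=> y _; apply: eq_bigr => k _; rewrite uv.
  rewrite sum_w // /=; ring.
rewrite (eq_bigr (fun y => \sum_(k < T.+1)
     bern (pi v s t) y.1 * bern (p v s) y.2 * zweight g t k * F y.1 k)); last first.
  by move=> y _; apply: eq_bigr => k _; rewrite eqxx.
set X := fun b => \sum_(k < T.+1) bern (pi v s t) b * zweight g t k * F b k.
have e : forall y : bool * bool, \sum_(k < T.+1)
     bern (pi v s t) y.1 * bern (p v s) y.2 * zweight g t k * F y.1 k
     = bern (p v s) y.2 * X y.1.
  by move=> y; rewrite /X mulr_sumr; apply: eq_bigr => k _; ring.
under eq_bigr do rewrite e.
rewrite sum_bb big_bool /X /bern /=; ring.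
Qed.

Lemma comp_prod (r : {ffun 'I_V -> nat}) t c :
  ((completes r t c v)%:R : R) = \prod_(u < V)
     (if (u < v)%N then 1 - ([&& (r u <= t)%N, (c u).1 & (c u).2])%:R
      else if u == v then ([&& (r v <= t)%N, (c v).1 & (c v).2])%:R else 1).
Proof.
rewrite prod_split /completes /accepts.
case: (boolP [forall u : 'I_V, (u < v)%N ==> ~~ [&& (r u <= t)%N, (c u).1 & (c u).2]]) => H.
  rewrite andbT big1 ?mul1r // => u uv.
  by move/forallP: H => /(_ u); rewrite uv /= => /negbTE ->; rewrite subr0.
rewrite andbF; move/forallPn: H => [u]; rewrite negb_imply negbK => /andP[uv au].
by rewrite (bigD1 u) //= au subrr !mul0r.
Qed.

Lemma pcomp (r : {ffun 'I_V -> nat}) t s : (t <= T)%N ->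
  \sum_(c : {ffun 'I_V -> bool * bool}) \sum_(z : {ffun 'I_V -> 'I_T.+1})
     step_weight lam p g x t s c z * (completes r t c v)%:R
  = ((r v <= t)%N)%:R * (pi v s t * p v s *
      \prod_(u < V | (u < v)%N) (1 - ((r u <= t)%N)%:R * (pi u s t * p u s))).
Proof.
move=> tT.
transitivity (\sum_(c : {ffun 'I_V -> bool * bool}) \sum_(z : {ffun 'I_V -> 'I_T.+1})
   \prod_(u < V) (bern (pi u s t) (c u).1 * bern (p u s) (c u).2 * zweight g t (z u)
      * (if (u < v)%N then 1 - ([&& (r u <= t)%N, (c u).1 & (c u).2])%:R
      else if u == v then ([&& (r v <= t)%N, (c u).1 & (c u).2])%:R else 1))).
  apply: eq_bigr => c _; apply: eq_bigr => z _.
  rewrite comp_prod big_split; congr (_ * _); apply: eq_bigr => u _.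
  by case: ifP => // _; case: eqP => // ->.
rewrite (sum_prod (fun u y k => bern (pi u s t) y.1 * bern (p u s) y.2 * zweight g t k
      * (if (u < v)%N then 1 - ([&& (r u <= t)%N, y.1 & y.2])%:R
      else if u == v then ([&& (r v <= t)%N, y.1 & y.2])%:R else 1))).
rewrite (eq_bigr (fun u : 'I_V => if (u < v)%N then 1 - ((r u <= t)%N)%:R * (pi u s t * p u s)
      else if u == v then ((r v <= t)%N)%:R * (pi v s t * p v s) else 1)); last first.
  move=> u _.
  rewrite (eq_bigr (fun y => \sum_(k < T.+1)
     bern (pi u s t) y.1 * bern (p u s) y.2 * zweight g t k *
     (fun y : bool * bool => (if (u < v)%N then 1 - ([&& (r u <= t)%N, y.1 & y.2])%:R
      else if u == v then ([&& (r v <= t)%N, y.1 & y.2])%:R else 1)) y)); last first.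
    by move=> y _; apply: eq_bigr.
  rewrite sum_w //=.
  case: ifP => _.
    by case: (r u <= t)%N => /=; ring.
  case: eqP => [->|_].
    by case: (r v <= t)%N => /=; ring.
  ring.
rewrite prod_split; ring.
Qed.

Lemma EstZr t c F rho : Est t (fun r => F r * c) rho = Est t F rho * c.
Proof.
rewrite mulrC -EstZ; apply: Est_ext => r; exact: mulrC.
Qed.

Lemma ident m : forall t rho, (t + m <= T)%N ->
  1 - a m t rho = ((t + m < rho)%N)%:R + \sum_(j < m) a j t rho * h (t + j) (t + m).
Proof.
elim: m => [|m IH] t rho htm.
  rewrite big_ord0 addr0 addn0 /= ltnNge.
  by case: (rho <= t)%N => /=; ring.
rewrite big_ord_recl.
under eq_bigr do rewrite lift0.
rewrite /= addn0.
have tT : (t <= T)%N by lia.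
have e1 : \sum_(j < m) Est t (a j t.+1) rho * h (t + j.+1) (t + m.+1)
   = Est t (fun r => 1 - a m t.+1 r - ((t.+1 + m < r)%N)%:R) rho.
  transitivity (Est t (fun r => \sum_(j < m) a j t.+1 r * h (t.+1 + j) (t.+1 + m)) rho).
    rewrite (@Est_sum t m (fun j r => a j t.+1 r * h (t.+1 + j) (t.+1 + m))); apply: eq_bigr => j _.
    by rewrite EstZr !addSn !addnS.
  apply: Est_ext => r.
  have hm : (t.+1 + m <= T)%N by lia.
  have := IH t.+1 r hm.
  lra.
rewrite e1 !EstB Est_const // !addSn !addnS.
rewrite (@Est_tail t (t + m).+1 rho); last by lia.
lra.
Qed.

Lemma a_beta m : (m.+1 <= T)%N -> a m 1 0 = bt v m.+1.
Proof.
elim/ltn_ind: m => m IH hT.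
have h1m : (1 + m <= T)%N by rewrite add1n.
have := @ident m 1 0 h1m.
rewrite ltn0 add1n.
rewrite (eq_bigr (fun j : 'I_m => bt v j.+1 * h j.+1 m.+1)); last first.
  move=> j _; rewrite IH //; have := ltn_ord j; lia.
move=> e.
have -> : bt v m.+1 = 1 - \sum_(j < m) bt v j.+1 * h j.+1 m.+1.
  rewrite [bt v m.+1]/beta big_add1 /= big_mkord; congr (1 - _); apply: eq_bigr => j _.
  rewrite /h mulr_sumr; apply: eq_bigr => s _.
  have hj : (1 <= j.+1 <= T)%N by apply/andP; split => //; apply: leq_trans hT; rewrite ltnS ltnW.
  rewrite -(pi_beta v s hj); ring.
move: e; rewrite (_ : false%:R = 0 :> R) //; lra.
Qed.

Definition Kc s t := pi v s t * p v s * \prod_(u < V | (u < v)%N) (1 - p u s * x u s t).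
Definition C t := \sum_(s < S) lam s t * Kc s t.
Definition LB n t rho := \sum_(m < n) C (t + m) * a m t rho.

Lemma LB_rec n t rho : LB n.+1 t rho = C t * ((rho <= t)%N)%:R + Est t (LB n t.+1) rho.
Proof.
rewrite /LB big_ord_recl; under eq_bigr do rewrite lift0.
rewrite addn0 /=; congr (_ + _).
rewrite (@Est_sum t n (fun j r => C (t.+1 + j) * a j t.+1 r)).
apply: eq_bigr => j _; rewrite /= EstZ.
by rewrite addSn addnS.
Qed.

Lemma split2 (f1 f2 : {ffun 'I_V -> bool * bool} -> {ffun 'I_V -> 'I_T.+1} -> R) :
  \sum_c \sum_z (f1 c z + f2 c z) = \sum_c \sum_z f1 c z + \sum_c \sum_z f2 c z.
Proof. by rewrite -big_split; apply: eq_bigr => c _; rewrite -big_split. Qed.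

Lemma sw_ge0 t s c (z : {ffun 'I_V -> 'I_T.+1}) : (1 <= t <= T)%N -> 0 <= step_weight lam p g x t s c z.
Proof.
move=> ht; apply: prodr_ge0 => u _.
have /andP[pi0 pix] := pi01 u s ht; have /andP[_ x1] := x01 u s ht.
apply: mulr_ge0; last exact: zw_ge0.
apply: mulr_ge0; apply: bern_ge0; last exact: p01.
by rewrite pi0 /=; apply: le_trans x1.
Qed.

Lemma Kc_le (r : {ffun 'I_V -> nat}) s t : (1 <= t <= T)%N ->
  Kc s t * ((r v <= t)%N)%:R <= ((r v <= t)%N)%:R * (pi v s t * p v s *
      \prod_(u < V | (u < v)%N) (1 - ((r u <= t)%N)%:R * (pi u s t * p u s))).
Proof.
move=> ht; case: (r v <= t)%N; last by rewrite /= (_ : false%:R = 0 :> R) // mulr0 mul0r.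
rewrite /= (_ : true%:R = 1 :> R) // mulr1 mul1r /Kc.
have /andP[pi0 _] := pi01 v s ht; have /andP[p0 _] := p01 v s.
apply: ler_wpM2l; first exact: mulr_ge0.
apply: ler_prod => u _.
have /andP[pu0 pux] := pi01 u s ht; have /andP[x0 x1] := x01 u s ht.
have /andP[p0' p1'] := p01 u s.
apply/andP; split.
  by rewrite subr_ge0; nra.
case: (r u <= t)%N => /=.
  rewrite (_ : true%:R = 1 :> R) // mul1r; nra.
rewrite (_ : false%:R = 0 :> R) // mul0r subr0; nra.
Qed.

Lemma exp_lb n : forall t (r : {ffun 'I_V -> nat}), (1 <= t)%N -> (t + n <= T.+1)%N ->
  LB n t (r v) <= exp_completed T lam p g x v n t r.
Proof.
elim: n => [|n IH] t r t1 tn.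
  by rewrite /LB big_ord0.
have tT : (t <= T)%N by lia.
have ht : (1 <= t <= T)%N by rewrite t1 tT.
rewrite LB_rec /=.
have IH' : forall r' : {ffun 'I_V -> nat}, LB n t.+1 (r' v) <= exp_completed T lam p g x v n t.+1 r'.
  by move=> r'; apply: IH => //; lia.
apply: (le_trans (_ : _ <= (1 - \sum_(s < S) lam s t) * LB n t.+1 (r v)
   + \sum_(s < S) lam s t * (\sum_c \sum_z step_weight lam p g x t s c z *
       ((completes r t c v)%:R + LB n t.+1 (next_state r t c z v))))); last first.
  apply: lerD; first by apply: ler_wpM2l; [exact: lam_sum | exact: IH'].
  apply: ler_sum => s _; apply: ler_wpM2l; first exact: lam_ge0.
  apply: ler_sum => c _; apply: ler_sum => z _.
  apply: ler_wpM2l; first exact: sw_ge0.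
  by rewrite lerD2l.
rewrite /Est addrCA lerD2l.
rewrite /C mulr_suml -big_split /=; apply: ler_sum => s _.
under [X in _ <= _ * X]eq_bigr do under eq_bigr do rewrite mulrDr.
rewrite split2 pcomp //.
rewrite (eq_bigr (fun c => \sum_z step_weight lam p g x t s c z *
     (fun b k => LB n t.+1 (nxt t (r v) b k)) (c v).1 (z v))); last first.
  by move=> c _; apply: eq_bigr => z _; rewrite ffunE.
rewrite (@marg t s (fun b k => LB n t.+1 (nxt t (r v) b k))) // -mulrA -mulrDr; apply: ler_wpM2l; first exact: lam_ge0.
rewrite lerD2r; exact: Kc_le.
Qed.

Lemma final_eq : (2 - q)^-1 * f_obj T lam p x v = LB T 1 0.
Proof.
have q0 : 2 - q != 0 by have := twoq_gt0; lra.
rewrite /f_obj /LB big_add1 /= big_mkord mulr_sumr; apply: eq_bigr => m _.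
have hm : (1 <= m.+1 <= T)%N by rewrite /= ltn_ord.
rewrite a_beta ?ltn_ord // add1n /C mulr_suml mulr_sumr; apply: eq_bigr => s _.
rewrite /Kc; set P := \prod_(u < V | _) _.
rewrite (_ : lam s m.+1 * (pi v s m.+1 * p v s * P) * bt v m.+1
   = lam s m.+1 * p v s * P * (pi v s m.+1 * bt v m.+1)); last by ring.
rewrite pi_beta //; field; exact: q0.
Qed.

End Main.

Theorem lemma8 (R : realType) (V S T : nat) (lam : 'I_S -> nat -> R)
  (p : 'I_V -> 'I_S -> R) (g : nat -> R) (x : 'I_V -> 'I_S -> nat -> R) :
  valid_instance T lam p g ->
  in_P T lam g x ->
  forall v : 'I_V,
    (2 - mdhr g)^-1 * f_obj T lam p x v <= expected_completed T lam p g x v.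
Proof.
move=> hv hP v.
have h1T : (1 + T <= T.+1)%N by rewrite add1n.
have := @exp_lb R V S T lam p g x hv hP v T 1 [ffun => 0%N] (leqnn 1) h1T.
rewrite ffunE => H; apply: (le_trans _ H).
by rewrite (final_eq hv hP).
Qed.
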